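(* A semigroup $S$ is a T2R semigroup if and only if it satisfies all of the following conditions. (1) $S$ is a semilattice of a non-trivial nil semigroup $S_0$ and a two-element right zero semigroup $S_1$ such that $S_0S_1\subseteq S_0$. (2) The ideals of $S$ form a chain with respect to inclusion. (3) For each $b\in S_0$, either $b\in bS_1$ or $bS_1\subseteq S^1bS_0$. (4) For each $b\in S_0$, either $\{b\}=S_1b$ or $S_1b\cap (S_0bS^1\cup S^1bS_0)\neq\emptyset$. (5) For each $b\in S$, if $|J_b|=2$, $I(b)\neq\{0\}$ and $a\in I(b)$, then there are elements $x,y\in S^1$ such that $xJ_by\cap J_a\neq\emptyset$ and $xJ_by\not\subseteq J_a$.
   Context: A semigroup $S$ is a $\Delta$-semigroup if the lattice of all congruences of $S$ is a chain with respect to inclusion. A semigroup $N$ with zero $0$ is nil if every element has some power equal to $0$; it is non-trivial if it has more than one element. A semigroup $S$ is a semilattice of a subsemigroup $S_0$ (which is an ideal) and a subsemigroup $S_1$ if $S$ is the disjoint union $S_0\cup S_1$, $S_0$ is an ideal of $S$ and $S_1$ is a subsemigroup (so $S/S_0$ is the two-element semilattice). A right zero semigroup satisfies $xy=y$ for all $x,y$. A T2R semigroup is a $\Delta$-semigroup $S$ which is a semilattice of a non-trivial nil ideal $S_0$ and a subsemigroup $S_1$ which is a two-element right zero semigroup. $S^1$ denotes $S$ with an identity element $1$ adjoined. For $a\in S$: $J(a)=S^1aS^1$, $J_a=\{s\in S: J(s)=J(a)\}$, and $I(a)=J(a)\setminus J_a$. For $x,y\in S^1$ and $A\subseteq S$,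 $xAy=\{xay: a\in A\}$. $0$ denotes the zero of $S_0$ (which is the zero of $S$). *)

(* Defs.v *)
Set Implicit Arguments.

Section Semigroups.
Variable (T : Type) (op : T -> T -> T).
Local Infix "*" := op.

Definition associative : Prop := forall x y z, x * (y * z) = (x * y) * z.

Definition congruence (r : T -> T -> Prop) : Prop :=
  (forall x, r x x) /\ (forall x y, r x y -> r y x) /\
  (forall x y z, r x y -> r y z -> r x z) /\
  (forall x y c, r x y -> r (c * x) (c * y) /\ r (x * c) (y * c)).

Definition Delta_semigroup : Prop :=
  forall r s, congruence r -> congruence s ->
    (forall x y, r x y -> s x y) \/ (forall x y, s x y -> r x y).

(* positive powers: pw x n = x^(n+1) *)
Fixpoint pw (x : T) (n : nat) : T :=
  match n with O => x | Datatypes.S m => x * pw x m end.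

(* T^1 : None plays the role of the adjoined identity 1 *)
Definition lmul (x : option T) (a : T) : T :=
  match x with None => a | Some x' => x' * a end.
Definition rmul (a : T) (y : option T) : T :=
  match y with None => a | Some y' => a * y' end.

Definition ideal (I : T -> Prop) : Prop :=
  (exists a, I a) /\ (forall a s, I a -> I (s * a) /\ I (a * s)).

(* T is a semilattice of the ideal S0 and the subsemigroup S1 = T \ S0 *)
Definition semilattice_decomp (S0 : T -> Prop) : Prop :=
  ideal S0 /\ (forall x y, ~ S0 x -> ~ S0 y -> ~ S0 (x * y)).

Definition nil_with_zero (S0 : T -> Prop) (z : T) : Prop :=
  S0 z /\ (forall x, S0 x -> z * x = z /\ x * z = z) /\
  (forall x, S0 x -> exists n, pw x n = z).

Definition nontrivial (S0 : T -> Prop) : Prop :=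
  exists x y, S0 x /\ S0 y /\ x <> y.

Definition two_elt_right_zero_compl (S0 : T -> Prop) : Prop :=
  (exists e f, e <> f /\ forall x, ~ S0 x <-> (x = e \/ x = f)) /\
  (forall x y, ~ S0 x -> ~ S0 y -> x * y = y).

Definition T2R_decomp (S0 : T -> Prop) (z : T) : Prop :=
  semilattice_decomp S0 /\ nil_with_zero S0 z /\ nontrivial S0 /\
  two_elt_right_zero_compl S0.

Definition T2R : Prop :=
  Delta_semigroup /\ exists S0 z, T2R_decomp S0 z.

Definition Jp (a : T) : T -> Prop :=
  fun s => exists x y : option T, s = rmul (lmul x a) y.
Definition Jcl (a : T) : T -> Prop :=
  fun s => forall t, Jp s t <-> Jp a t.
Definition Icl (a : T) : T -> Prop :=
  fun s => Jp a s /\ ~ Jcl a s.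

End Semigroups.

(* Main.v *)
Require Import Defs.
From Stdlib Require Import Classical.

Section T2RProof.
Variable S : Type.
Variable op : S -> S -> S.
Hypothesis Hassoc : associative op.
Local Notation "x ** y" := (op x y) (at level 40, left associativity).

Definition omul (x y : option S) : option S :=
  match x, y with
  | None, _ => y
  | _, None => x
  | Some a, Some b => Some (a ** b)
  end.

Definition ctx (x : option S) (a : S) (y : option S) : S := rmul op (lmul op x a) y.

Lemma lmul_mul x a c : lmul op x (a ** c) = lmul op x a ** c.
Proof. destruct x; simpl; rewrite ?Hassoc; reflexivity. Qed.
Lemma rmul_mul a c y : rmul op (a ** c) y = a ** rmul op c y.
Proof. destruct y; simpl; rewrite ?Hassoc; reflexivity. Qed.
Lemma lmul_rmul x a y : lmul op x (rmul op a y) = rmul op (lmul op x a) y.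
Proof. destruct x, y; simpl; rewrite ?Hassoc; reflexivity. Qed.
Lemma lmul_omul x x' a : lmul op (omul x x') a = lmul op x (lmul op x' a).
Proof. destruct x, x'; simpl; rewrite ?Hassoc; reflexivity. Qed.
Lemma rmul_omul a y y' : rmul op a (omul y y') = rmul op (rmul op a y) y'.
Proof. destruct y, y'; simpl; rewrite ?Hassoc; reflexivity. Qed.
Lemma ctx_ctx x a y x' y' : ctx x' (ctx x a y) y' = ctx (omul x' x) a (omul y y').
Proof. unfold ctx. rewrite lmul_rmul, <- rmul_omul, lmul_omul. auto. Qed.
Lemma ctx_mull c x a y : c ** ctx x a y = ctx (omul (Some c) x) a y.
Proof. unfold ctx. destruct x, y; simpl; repeat rewrite Hassoc; auto. Qed.
Lemma ctx_mulr c x a y : ctx x a y ** c = ctx x a (omul y (Some c)).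
Proof. unfold ctx. destruct x, y; simpl; repeat rewrite Hassoc; auto. Qed.

Lemma cong_refl r x : congruence op r -> r x x.
Proof. intros [H _]; auto. Qed.
Lemma cong_sym r x y : congruence op r -> r x y -> r y x.
Proof. intros [_ [H _]]; auto. Qed.
Lemma cong_trans r x y w : congruence op r -> r x y -> r y w -> r x w.
Proof. intros [_ [_ [H _]]]; eauto. Qed.
Lemma cong_mull r c x y : congruence op r -> r x y -> r (c ** x) (c ** y).
Proof. intros [_ [_ [_ H]]] h; apply H; auto. Qed.
Lemma cong_mulr r c x y : congruence op r -> r x y -> r (x ** c) (y ** c).
Proof. intros [_ [_ [_ H]]] h; apply H; auto. Qed.
Lemma cong_ctx r s a b t : congruence op r -> r a b -> r (ctx s a t) (ctx s b t).
Proof.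
  intros Hr h. unfold ctx. destruct s, t; simpl.
  - apply cong_mulr; auto. apply cong_mull; auto.
  - apply cong_mull; auto.
  - apply cong_mulr; auto.
  - auto.
Qed.
Lemma cong_pw r x y n : congruence op r -> r x y -> r (pw op x n) (pw op y n).
Proof.
  intros Hr h. induction n; simpl; auto.
  apply cong_trans with (y ** pw op x n); auto.
  apply cong_mulr; auto. apply cong_mull; auto.
Qed.
Lemma eq_cong : congruence op (@eq S).
Proof. unfold congruence; split; [|split; [|split]]; intros; subst; auto. Qed.

Definition rees (I : S -> Prop) : S -> S -> Prop := fun x y => x = y \/ (I x /\ I y).
Lemma rees_cong I : (forall a s, I a -> I (s ** a) /\ I (a ** s)) -> congruence op (rees I).
Proof.
  intros HI. unfold rees, congruence. split; [|split; [|split]].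
  - intros; left; auto.
  - intros x y [h|[h1 h2]]; [left; auto | right; auto].
  - intros x y w [h|h] [h'|h']; subst; [left; reflexivity|right; tauto..].
  - intros x y c [h|[h1 h2]].
    + subst; split; left; reflexivity.
    + split; right; split; first [apply (HI x c) | apply (HI y c)]; auto.
Qed.

Inductive chain (R : S -> S -> Prop) : S -> S -> Prop :=
| ch_refl : forall x, chain R x x
| ch_step : forall x y w, (R x y \/ R y x) -> chain R y w -> chain R x w.

Lemma chain_trans R x y w : chain R x y -> chain R y w -> chain R x w.
Proof. induction 1; intros; auto. eapply ch_step; eauto. Qed.
Lemma chain_sym R x y : chain R x y -> chain R y x.
Proof.
  induction 1. constructor.
  apply chain_trans with y; auto. eapply ch_step. destruct H; [right|left]; eauto. constructor.
Qed.
Lemma chain_cong R : (forall p q c, R p q -> R (c ** p) (c ** q) /\ R (p ** c) (q ** c)) ->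
  congruence op (chain R).
Proof.
  intros HR. unfold congruence. split; [|split; [|split]].
  - intros; constructor.
  - apply chain_sym.
  - apply chain_trans.
  - intros x y c H. split. induction H. constructor. eapply ch_step; eauto.
    destruct H; [left|right]; apply HR; auto.
    induction H. constructor. eapply ch_step; eauto.
    destruct H; [left|right]; apply HR; auto.
Qed.
Lemma chain_inv R (P : S -> Prop) : (forall p q, R p q -> (P p <-> P q)) ->
  forall x y, chain R x y -> (P x <-> P y).
Proof.
  intros HP. induction 1. tauto. destruct H; [apply HP in H|apply HP in H]; tauto.
Qed.
Lemma chain_cross R (P : S -> Prop) x y : chain R x y -> P x -> ~ P y ->
  exists p q, (R p q \/ R q p) /\ P p /\ ~ P q.
Proof.
  induction 1; intros. contradiction.
  destruct (classic (P y)). apply IHchain; auto.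
  exists x, y; auto.
Qed.

Definition Rp (u v : S) : S -> S -> Prop := fun p q => exists x y, p = ctx x u y /\ q = ctx x v y.
Lemma Rp_cong u v : congruence op (chain (Rp u v)).
Proof.
  apply chain_cong. intros p q c [x [y [-> ->]]]. split.
  - exists (omul (Some c) x), y. rewrite !ctx_mull; auto.
  - exists x, (omul y (Some c)). rewrite !ctx_mulr; auto.
Qed.
Lemma Rp_uv u v : chain (Rp u v) u v.
Proof. eapply ch_step. left. exists None, None. split; reflexivity. constructor. Qed.

Lemma Jp_refl a : Jp op a a.
Proof. exists None, None; reflexivity. Qed.
Lemma Jp_ctx a x y : Jp op a (ctx x a y).
Proof. exists x, y; reflexivity. Qed.
Lemma Jp_trans a b c : Jp op a b -> Jp op b c -> Jp op a c.
Proof.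
  intros [x [y ->]] [x' [y' ->]]. exists (omul x' x), (omul y y').
  fold (ctx x a y). fold (ctx x' (ctx x a y) y'). rewrite ctx_ctx. reflexivity.
Qed.
Lemma Jp_mull a b c : Jp op a b -> Jp op a (c ** b).
Proof. intros H. eapply Jp_trans; eauto. exists (Some c), None; reflexivity. Qed.
Lemma Jp_mulr a b c : Jp op a b -> Jp op a (b ** c).
Proof. intros H. eapply Jp_trans; eauto. exists None, (Some c); reflexivity. Qed.
Lemma Jp_clos a : forall b s, Jp op a b -> Jp op a (s ** b) /\ Jp op a (b ** s).
Proof. intros; split; [apply Jp_mull|apply Jp_mulr]; auto. Qed.
Lemma Jp_ideal a : ideal op (Jp op a).
Proof. split. exists a; apply Jp_refl. apply Jp_clos. Qed.

Lemma Jcl_refl a : Jcl op a a.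
Proof. intro; tauto. Qed.
Lemma Jcl_sym a b : Jcl op a b -> Jcl op b a.
Proof. intros H t; specialize (H t); tauto. Qed.
Lemma Jcl_trans a b c : Jcl op a b -> Jcl op b c -> Jcl op a c.
Proof. intros H H' t; specialize (H t); specialize (H' t); tauto. Qed.
Lemma Jcl_Jp a b : Jcl op a b -> Jp op a b.
Proof. intros H. apply H, Jp_refl. Qed.
Lemma Jcl_Jp' a b : Jcl op a b -> Jp op b a.
Proof. intros H. apply H, Jp_refl. Qed.
Lemma Jcl_of a b : Jp op a b -> Jp op b a -> Jcl op a b.
Proof. intros H1 H2 t; split; intro; eapply Jp_trans; eauto. Qed.

Lemma Icl_clos p : forall w s, Icl op p w -> Icl op p (s ** w) /\ Icl op p (w ** s).
Proof.
  intros w s [H1 H2]. split; split.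
  - apply Jp_mull; auto.
  - intro H. apply H2. apply Jcl_of; auto. apply Jcl_Jp' in H.
    eapply Jp_trans; [|exact H]. exists (Some s), None; reflexivity.
  - apply Jp_mulr; auto.
  - intro H. apply H2. apply Jcl_of; auto. apply Jcl_Jp' in H.
    eapply Jp_trans; [|exact H]. exists None, (Some s); reflexivity.
Qed.
Lemma Icl_ctx p w x y : Icl op p w -> Icl op p (ctx x w y).
Proof.
  intros H. unfold ctx. destruct x, y; simpl.
  - apply (Icl_clos _ _ s0 (proj1 (Icl_clos _ _ s H))).
  - apply (proj1 (Icl_clos _ _ s H)).
  - apply (proj2 (Icl_clos _ _ s H)).
  - auto.
Qed.


Variable S0 : S -> Prop.
Variable z : S.
Hypothesis HD : T2R_decomp op S0 z.

Lemma S0_ideal : forall a s, S0 a -> S0 (s ** a) /\ S0 (a ** s).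
Proof. destruct HD as [[[_ H] _] _]. exact H. Qed.
Lemma S0_l a s : S0 a -> S0 (s ** a).
Proof. intros H; exact (proj1 (S0_ideal a s H)). Qed.
Lemma S0_r a s : S0 a -> S0 (a ** s).
Proof. intros H; exact (proj2 (S0_ideal a s H)). Qed.
Lemma S0_z : S0 z.
Proof. destruct HD as [_ [[H _] _]]. exact H. Qed.
Lemma z_S0 x : S0 x -> z ** x = z /\ x ** z = z.
Proof. destruct HD as [_ [[_ [H _]] _]]. intros; apply H; auto. Qed.
Lemma nil_S0 x : S0 x -> exists n, pw op x n = z.
Proof. destruct HD as [_ [[_ [_ H]] _]]. intros; apply H; auto. Qed.
Lemma nontriv : exists x y, S0 x /\ S0 y /\ x <> y.
Proof. destruct HD as [_ [_ [H _]]]. exact H. Qed.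
Lemma ef_ex : exists e f, e <> f /\ forall x, ~ S0 x <-> (x = e \/ x = f).
Proof. destruct HD as [_ [_ [_ [H _]]]]. exact H. Qed.
Lemma rz x y : ~ S0 x -> ~ S0 y -> x ** y = y.
Proof. destruct HD as [_ [_ [_ [_ H]]]]. intros; apply H; auto. Qed.
Lemma S1_mul x y : ~ S0 x -> ~ S0 y -> ~ S0 (x ** y).
Proof. intros; rewrite rz; auto. Qed.

Lemma zl x : z ** x = z.
Proof.
  destruct (classic (S0 x)). apply (z_S0 x); auto.
  assert (Hzz : z ** z = z) by (exact (proj1 (z_S0 z S0_z))).
  assert (S0 (z ** x)) by (apply S0_r, S0_z).
  rewrite <- Hzz at 1. rewrite <- Hassoc. apply (z_S0 (z ** x)); auto.
Qed.
Lemma zr x : x ** z = z.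
Proof.
  destruct (classic (S0 x)). apply (z_S0 x); auto.
  assert (Hzz : z ** z = z) by (exact (proj1 (z_S0 z S0_z))).
  assert (S0 (x ** z)) by (apply S0_l, S0_z).
  rewrite <- Hzz at 1. rewrite Hassoc. apply (z_S0 (x ** z)); auto.
Qed.
Lemma ctx_z x y : ctx x z y = z.
Proof. unfold ctx; destruct x, y; simpl; repeat (rewrite zl || rewrite zr); auto. Qed.

Lemma pw_comm x n : pw op x n ** x = x ** pw op x n.
Proof.
  induction n; simpl; auto. rewrite <- Hassoc, IHn. reflexivity.
Qed.
Lemma pw_idem x n : ~ S0 x -> pw op x n = x.
Proof. intros H; induction n; simpl; auto. rewrite IHn; apply rz; auto. Qed.

Definition nS0o (o : option S) : Prop := match o with None => True | Some a => ~ S0 a end.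
Definition S0o (o : option S) : Prop := match o with None => False | Some a => S0 a end.
Lemma nS0o_dec o : nS0o o \/ S0o o.
Proof. destruct o; simpl; auto. destruct (classic (S0 s)); auto. Qed.

Lemma ctx_S0 x a y : S0 a -> S0 (ctx x a y).
Proof. intros; unfold ctx; destruct x, y; simpl; auto using S0_l, S0_r. Qed.
Lemma Jp_S0 m x : S0 m -> Jp op m x -> S0 x.
Proof. intros H [a [b ->]]. apply (ctx_S0 a m b); auto. Qed.
Lemma Jp_z x : Jp op z x -> x = z.
Proof. intros [a [b ->]]. apply (ctx_z a b). Qed.
Lemma Jp_to_z a : Jp op a z.
Proof. exists None, (Some z). simpl. symmetry; apply zr. Qed.

Lemma iter_cong r y s t : congruence op r -> r y (ctx s y t) -> (S0o s \/ S0o t) -> r y z.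
Proof.
  intros Hr H Hst.
  assert (Hn : forall n, r y (Nat.iter n (fun w => ctx s w t) y)).
  { induction n. apply cong_refl; auto. simpl.
    apply cong_trans with (Nat.iter n (fun w => ctx s w t) y); auto.
    clear IHn. induction n. simpl; auto. simpl. apply cong_ctx; auto. }
  destruct Hst as [Hs|Ht].
  - destruct s as [s0|]; simpl in Hs; [|contradiction].
    assert (Hk : forall n, exists w, Nat.iter (Datatypes.S n) (fun w => ctx (Some s0) w t) y = pw op s0 n ** w).
    { induction n. exists (rmul op y t). simpl. unfold ctx; simpl. first [reflexivity | apply rmul_mul].
      destruct IHn as [w Hw]. exists (rmul op w t).
      change (Nat.iter (Datatypes.S (Datatypes.S n)) (fun w => ctx (Some s0) w t) y) with
        (ctx (Some s0) (Nat.iter (Datatypes.S n) (fun w => ctx (Some s0) w t) y) t).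
      rewrite Hw. unfold ctx; simpl. rewrite Hassoc, rmul_mul. reflexivity. }
    destruct (nil_S0 s0 Hs) as [n Hn0]. destruct (Hk n) as [w Hw].
    specialize (Hn (Datatypes.S n)). rewrite Hw, Hn0, zl in Hn. auto.
  - destruct t as [t0|]; simpl in Ht; [|contradiction].
    assert (Hk : forall n, exists w, Nat.iter (Datatypes.S n) (fun w => ctx s w (Some t0)) y = w ** pw op t0 n).
    { induction n. exists (lmul op s y). simpl. unfold ctx; simpl. first [reflexivity | apply lmul_mul].
      destruct IHn as [w Hw]. exists (lmul op s w).
      change (Nat.iter (Datatypes.S (Datatypes.S n)) (fun w => ctx s w (Some t0)) y) with
        (ctx s (Nat.iter (Datatypes.S n) (fun w => ctx s w (Some t0)) y) (Some t0)).
      rewrite Hw. unfold ctx; simpl. rewrite lmul_mul, <- Hassoc, pw_comm. reflexivity. }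
    destruct (nil_S0 t0 Ht) as [n Hn0]. destruct (Hk n) as [w Hw].
    specialize (Hn (Datatypes.S n)). rewrite Hw, Hn0, zr in Hn. auto.
Qed.
Lemma iter_eq y s t : y = ctx s y t -> (S0o s \/ S0o t) -> y = z.
Proof. intros. apply (iter_cong (@eq S) y s t); auto. apply eq_cong. Qed.


Lemma S0o_omul_l x x' : S0o x -> S0o (omul x' x).
Proof. destruct x as [a|]; simpl; [|tauto]. destruct x'; simpl; auto using S0_l. Qed.
Lemma S0o_omul_r y y' : S0o y -> S0o (omul y y').
Proof. destruct y as [a|]; simpl; [|tauto]. destruct y'; simpl; auto using S0_r. Qed.

Lemma Jcl_z s : Jcl op z s -> s = z.
Proof. intros H. apply Jp_z, Jcl_Jp; auto. Qed.

Lemma J_form p s : S0 p -> p <> z -> Jcl op p s -> exists c, nS0o c /\ s = rmul op p c.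
Proof.
  intros Hp Hpz H.
  destruct (Jcl_Jp _ _ H) as [x [y Hs]]. destruct (Jcl_Jp' _ _ H) as [x' [y' Hp']].
  fold (ctx x p y) in Hs. fold (ctx x' s y') in Hp'. rewrite Hs, ctx_ctx in Hp'.
  destruct (nS0o_dec (omul x' x)) as [HX|HX];
    [| exfalso; apply Hpz; eapply iter_eq; eauto].
  destruct (nS0o_dec (omul y y')) as [HY|HY];
    [| exfalso; apply Hpz; eapply iter_eq; eauto].
  assert (Hy : nS0o y).
  { destruct (nS0o_dec y) as [|Hy]; auto. apply (S0o_omul_r _ y') in Hy.
    destruct (omul y y'); simpl in *; tauto. }
  exists y. split; auto. rewrite Hs. unfold ctx.
  destruct x as [c|]; [|reflexivity].
  assert (Hc : ~ S0 c).
  { intro Hc. assert (HH : S0o (Some c)) by exact Hc. apply (S0o_omul_l _ x') in HH.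
    destruct (omul x' (Some c)); simpl in *; tauto. }
  assert (EX : exists c2, omul x' (Some c) = Some c2) by (destruct x'; eexists; reflexivity).
  destruct EX as [c2 EX]. rewrite EX in HX, Hp'. simpl in HX.
  set (Y := omul y y') in *. unfold ctx in Hp'; simpl in Hp'.
  assert (H2 : c2 ** p = p).
  { transitivity (c2 ** rmul op (c2 ** p) Y). { now rewrite <- Hp'. }
    rewrite <- rmul_mul, Hassoc, (rz c2 c2); auto. }
  simpl. f_equal. rewrite <- H2 at 1. rewrite Hassoc, (rz c c2); auto.
Qed.

Lemma size2 p q : S0 p -> Jcl op p q -> p <> q -> forall s, Jcl op p s -> s = p \/ s = q.
Proof.
  intros Hp Hpq Hne s Hs.
  assert (Hpz : p <> z).
  { intro; subst. apply Hne. symmetry; apply Jcl_z; auto. }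
  destruct (J_form p q Hp Hpz Hpq) as [[d0|] [Hd0 Hq]]; [| simpl in Hq; congruence].
  simpl in Hd0, Hq.
  assert (HqS : S0 q) by (rewrite Hq; apply S0_r; auto).
  assert (Hqz : q <> z).
  { intro E. apply Hpz. apply Jp_z. rewrite <- E. apply Jcl_Jp'; auto. }
  destruct (J_form q p HqS Hqz (Jcl_sym _ _ Hpq)) as [c' [Hc' Hp2]].
  rewrite Hq, rmul_mul in Hp2.
  assert (Hd1 : ~ S0 (rmul op d0 c')).
  { destruct c'; simpl in *; auto. apply S1_mul; auto. }
  set (d1 := rmul op d0 c') in *.
  destruct (J_form p s Hp Hpz Hs) as [[c0|] [Hc0 Hs2]]; [|left; auto].
  simpl in Hc0, Hs2.
  assert (Hdd : d0 <> d1).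
  { intro E. apply Hne. rewrite Hq, E. auto. }
  destruct ef_ex as [e [f [Hef Hx]]].
  assert (c0 = d0 \/ c0 = d1).
  { destruct (proj1 (Hx c0) Hc0) as [-> | ->];
    destruct (proj1 (Hx d0) Hd0) as [-> | ->];
    destruct (proj1 (Hx d1) Hd1) as [-> | ->]; auto; congruence. }
  destruct H as [-> | ->]; [right; congruence | left; congruence].
Qed.

Lemma Jcl_S1 u v : ~ S0 u -> ~ S0 v -> Jcl op u v.
Proof.
  intros Hu Hv. apply Jcl_of.
  - exists None, (Some v). simpl. symmetry; apply rz; auto.
  - exists None, (Some u). simpl. symmetry; apply rz; auto.
Qed.
Lemma Jcl_S0_S1 u s : ~ S0 u -> S0 s -> ~ Jcl op u s.
Proof. intros Hu Hs H. apply Hu. apply (Jp_S0 s u); auto. apply Jcl_Jp'; auto. Qed.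

Lemma cong_J r x w : congruence op r -> r x z -> Jp op x w -> r w z.
Proof.
  intros Hr H [a [b ->]]. fold (ctx a x b). rewrite <- (ctx_z a b). apply cong_ctx; auto.
Qed.


Section Backward.
Hypothesis H2 : forall I J, ideal op I -> ideal op J ->
       (forall s, I s -> J s) \/ (forall s, J s -> I s).
Hypothesis H3 : forall b, S0 b ->
       (exists c, ~ S0 c /\ b = op b c) \/
       (forall c, ~ S0 c ->
          exists (x : option S) (d : S), S0 d /\ op b c = lmul op x (op b d)).
Hypothesis H4 : forall b, S0 b ->
       (forall s, (exists c, ~ S0 c /\ s = op c b) <-> s = b) \/
       (exists c, ~ S0 c /\
          ((exists d (y : option S), S0 d /\ op c b = op d (rmul op b y)) \/
           (exists (x : option S) d, S0 d /\ op c b = lmul op x (op b d)))).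
Hypothesis H5 : forall b a,
       (exists u v, u <> v /\ forall s, Jcl op b s <-> (s = u \/ s = v)) ->
       ~ (forall s, Icl op b s <-> s = z) ->
       Icl op b a ->
       exists x y : option S,
         (exists t, Jcl op b t /\ Jcl op a (rmul op (lmul op x t) y)) /\
         (exists t, Jcl op b t /\ ~ Jcl op a (rmul op (lmul op x t) y)).

Lemma Jp_chain a b : (forall s, Jp op a s -> Jp op b s) \/ (forall s, Jp op b s -> Jp op a s).
Proof. apply H2; apply Jp_ideal. Qed.

Lemma S0_is_ideal : ideal op S0.
Proof. split. exists z; apply S0_z. apply S0_ideal. Qed.

Lemma F1_right r y t : congruence op r -> S0 y -> nS0o t ->
  r y (rmul op y t) -> ~ Jcl op y (rmul op y t) -> r y z.
Proof.
  intros Hr Hy Ht H Hn. destruct t as [c|]; simpl in *; [|exfalso; apply Hn, Jcl_refl].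
  destruct (H3 y Hy) as [[c' [Hc' E]]|H3'].
  - exfalso; apply Hn. apply Jcl_of. exists None, (Some c); reflexivity.
    exists None, (Some c'). simpl. rewrite <- Hassoc, (rz c c'); auto.
  - destruct (H3' c Ht) as [x0 [d [Hd E]]].
    apply (iter_cong r y x0 (Some d)); auto. unfold ctx; simpl. rewrite <- lmul_mul, <- E; auto.
Qed.

Lemma F1 r y x : congruence op r -> Jp op y x -> ~ Jcl op y x -> r y x -> r y z.
Proof.
  intros Hr Hj Hn H.
  destruct (classic (S0 y)) as [Hy|Hy].
  2:{ destruct (classic (S0 x)) as [Hx|Hx].
      - destruct (nil_S0 x Hx) as [n Hn0]. pose proof (cong_pw r y x n Hr H) as HH.
        rewrite pw_idem, Hn0 in HH; auto.
      - exfalso; apply Hn, Jcl_S1; auto. }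
  destruct Hj as [s [t Hx]]. fold (ctx s y t) in Hx. subst x.
  destruct (nS0o_dec s) as [Hs|Hs]; [| apply (iter_cong r y s t); auto].
  destruct (nS0o_dec t) as [Ht|Ht]; [| apply (iter_cong r y s t); auto].
  destruct s as [c|]; [|apply (F1_right r y t); auto].
  simpl in Hs.
  destruct (H4 y Hy) as [H4'|[c' [Hc' H4']]].
  - assert (E : c ** y = y) by (apply H4'; exists c; auto).
    unfold ctx in *; simpl in *. rewrite E in *. apply (F1_right r y t); auto.
  - assert (Hc'y : r y (c' ** y)).
    { apply cong_trans with (ctx (Some c) y t); auto.
      assert (E : c' ** ctx (Some c) y t = ctx (Some c) y t).
      { unfold ctx; simpl. rewrite rmul_mul, Hassoc, (rz c' c); auto. }
      rewrite <- E at 1. apply cong_sym; auto. apply cong_mull; auto. }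
    destruct H4' as [[d [y' [Hd E]]]|[x' [d [Hd E]]]].
    + apply (iter_cong r y (Some d) y'); simpl; auto.
      unfold ctx; simpl. rewrite rmul_mul, <- E; auto.
    + apply (iter_cong r y x' (Some d)); simpl; auto.
      unfold ctx; simpl. rewrite <- lmul_mul, <- E; auto.
Qed.

Lemma F3 r u v a : congruence op r -> r u v -> Jcl op a u -> ~ Jcl op a v -> r a z.
Proof.
  intros Hr H Hu Hv.
  destruct (Jp_chain u v) as [Huv|Hvu].
  -
    assert (Hvu : Jp op v u) by (apply Huv, Jp_refl).
    assert (Hnc : ~ Jcl op v u).
    { intro HC. apply Hv. eapply Jcl_trans; eauto. apply Jcl_sym; auto. }
    assert (Hv0 : r v z) by (apply (F1 r v u); auto; apply cong_sym; auto).
    apply (cong_J r v a); auto. apply (Jp_trans v u a Hvu (Jcl_Jp' a u Hu)).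
  - assert (Huv : Jp op u v) by (apply Hvu, Jp_refl).
    assert (Hnc : ~ Jcl op u v).
    { intro HC. apply Hv. eapply Jcl_trans; eauto. }
    assert (Hu0 : r u z) by (apply (F1 r u v); auto).
    apply (cong_J r u a); auto. apply (Jcl_Jp' a u Hu).
Qed.

Lemma F4 r b : congruence op r ->
  (exists u v, u <> v /\ forall s, Jcl op b s <-> (s = u \/ s = v)) ->
  ~ (forall s, Icl op b s <-> s = z) ->
  (forall u v, Jcl op b u -> Jcl op b v -> r u v) ->
  forall a, Icl op b a -> r a z.
Proof.
  intros Hr Hsz Hnz Hall a Ha.
  destruct (H5 b a Hsz Hnz Ha) as [x [y [[t1 [Ht1 H1]] [t2 [Ht2 H2']]]]].
  apply (F3 r (ctx x t1 y) (ctx x t2 y) a); auto. apply cong_ctx; auto.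
Qed.


Definition G (K T : S -> Prop) x y := x = y \/ (K x /\ K y) \/ (T x /\ T y).
Definition Shape (K T : S -> Prop) :=
  (exists m, S0 m /\ (forall x, K x <-> Jp op m x) /\ (forall x, ~ T x)) \/
  (exists p, S0 p /\ (forall x, K x <-> Icl op p x) /\ (forall x, T x <-> Jcl op p x)) \/
  ((forall x, K x <-> S0 x) /\ (forall x, T x <-> ~ S0 x)) \/
  (forall x, K x).

Lemma G_sub K T K' T' : (forall x, K x \/ T x -> K' x) -> forall x y, G K T x y -> G K' T' x y.
Proof.
  intros H x y [E|[[A B]|[A B]]]; unfold G; [left; auto|right; left; split; apply H; auto..].
Qed.
Lemma G_eq K T K' T' : (forall x, K x <-> K' x) -> (forall x, T x <-> T' x) ->
  forall x y, G K T x y -> G K' T' x y.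
Proof.
  intros HH1 HH2 x y [E|[[A B]|[A B]]]; unfold G; [left; auto|right; left|right; right]; split;
  first [apply HH1 | apply HH2]; auto.
Qed.

Lemma Icl_Jp p x : Icl op p x -> Jp op p x.
Proof. intros [H _]; auto. Qed.
Lemma Jp_Icl p m x : Icl op p m -> Jp op m x -> Icl op p x.
Proof. intros H [a [b ->]]. apply Icl_ctx; auto. Qed.

Definition Sub (R R' : S -> S -> Prop) := forall x y, R x y -> R' x y.

Lemma chain_T1T2 K T K' T' m p : S0 m -> (forall x, K x <-> Jp op m x) -> (forall x, ~ T x) ->
  S0 p -> (forall x, K' x <-> Icl op p x) -> (forall x, T' x <-> Jcl op p x) ->
  Sub (G K T) (G K' T') \/ Sub (G K' T') (G K T).
Proof.
  intros Hm HK HT Hp HK' HT'. unfold Sub.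
  destruct (Jp_chain m p) as [Hmp|Hpm].
  - destruct (classic (Jcl op p m)) as [Hc|Hc].
    + right. apply G_sub. intros x Hx. apply HK. apply (Jp_trans m p x).
      apply Jcl_Jp'; auto. destruct Hx as [Hx|Hx]; [apply HK' in Hx|apply HT' in Hx];
      [apply Icl_Jp|apply Jcl_Jp]; auto.
    + left. apply G_sub. intros x [Hx|Hx]; [|exfalso; eapply HT; eauto].
      apply HK'. apply (Jp_Icl p m x). split; auto. apply Hmp, Jp_refl. apply HK; auto.
  - right. apply G_sub. intros x Hx. apply HK. apply Hpm.
    destruct Hx as [Hx|Hx]; [apply HK' in Hx|apply HT' in Hx]; [apply Icl_Jp|apply Jcl_Jp]; auto.
Qed.

Lemma shape_chain K T K' T' : Shape K T -> Shape K' T' ->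
  Sub (G K T) (G K' T') \/ Sub (G K' T') (G K T).
Proof.
  intros Sh Sh'. unfold Sub.
  destruct Sh' as [Sh'|[Sh'|[Sh'|Sh']]].
  4:{ left. apply G_sub. intros; apply Sh'. }
  all: destruct Sh as [Sh|[Sh|[Sh|Sh]]].
  all: try (right; apply G_sub; intros; apply Sh; fail).
  - destruct Sh as [m [Hm [HK HT]]], Sh' as [m' [Hm' [HK' HT']]].
    destruct (Jp_chain m m') as [H|H]; [left|right]; apply G_sub; intros x [Hx|Hx];
      try (exfalso; eapply HT; eauto; fail); try (exfalso; eapply HT'; eauto; fail);
      [apply HK'|apply HK]; apply H; [apply HK|apply HK']; auto.
  - destruct Sh as [p [Hp [HK HT]]], Sh' as [m [Hm [HK' HT']]].
    destruct (chain_T1T2 K' T' K T m p Hm HK' HT' Hp HK HT) as [A|A]; [right; exact A|left; exact A].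
  - destruct Sh as [HK HT], Sh' as [m [Hm [HK' HT']]].
    right. apply G_sub. intros x [Hx|Hx]; [|exfalso; eapply HT'; eauto].
    apply HK. apply (Jp_S0 m); auto. apply HK'; auto.
  - destruct Sh as [m [Hm [HK HT]]], Sh' as [p [Hp [HK' HT']]].
    exact (chain_T1T2 K T K' T' m p Hm HK HT Hp HK' HT').
  - destruct Sh as [p [Hp [HK HT]]], Sh' as [p' [Hp' [HK' HT']]].
    destruct (classic (Jcl op p p')) as [Hc|Hc].
    + left. apply G_eq; intro x.
      * rewrite HK, HK'. unfold Icl. split; intros [A1 A2]; split.
        -- apply (Jp_trans p' p x); auto. apply Jcl_Jp'; auto.
        -- intro; apply A2; eapply Jcl_trans; eauto.
        -- apply (Jp_trans p p' x); auto. apply Jcl_Jp; auto.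
        -- intro; apply A2; eapply Jcl_trans; eauto. apply Jcl_sym; auto.
      * rewrite HT, HT'. split; intro. eapply Jcl_trans; eauto. apply Jcl_sym; auto.
        eapply Jcl_trans; eauto.
    + destruct (Jp_chain p p') as [H|H].
      * left. apply G_sub. intros x Hx. apply HK'. apply (Jp_Icl p' p x).
        split. apply H, Jp_refl. intro; apply Hc; apply Jcl_sym; auto.
        destruct Hx as [Hx|Hx]; [apply HK in Hx|apply HT in Hx]; [apply Icl_Jp|apply Jcl_Jp]; auto.
      * right. apply G_sub. intros x Hx. apply HK. apply (Jp_Icl p p' x).
        split. apply H, Jp_refl. auto.
        destruct Hx as [Hx|Hx]; [apply HK' in Hx|apply HT' in Hx]; [apply Icl_Jp|apply Jcl_Jp]; auto.
  - destruct Sh as [HK HT], Sh' as [p [Hp [HK' HT']]].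
    right. apply G_sub. intros x Hx. apply HK. apply (Jp_S0 p); auto.
    destruct Hx as [Hx|Hx]; [apply HK' in Hx|apply HT' in Hx]; [apply Icl_Jp|apply Jcl_Jp]; auto.
  - destruct Sh as [m [Hm [HK HT]]], Sh' as [HK' HT'].
    left. apply G_sub. intros x [Hx|Hx]; [|exfalso; eapply HT; eauto].
    apply HK'. apply (Jp_S0 m); auto. apply HK; auto.
  - destruct Sh as [p [Hp [HK HT]]], Sh' as [HK' HT'].
    left. apply G_sub. intros x Hx. apply HK'. apply (Jp_S0 p); auto.
    destruct Hx as [Hx|Hx]; [apply HK in Hx|apply HT in Hx]; [apply Icl_Jp|apply Jcl_Jp]; auto.
  - destruct Sh as [HK HT], Sh' as [HK' HT'].
    left. apply G_eq; intro x; [rewrite HK, HK'|rewrite HT, HT']; tauto.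
Qed.


Lemma S1_two p q x : ~ S0 p -> ~ S0 q -> p <> q -> ~ S0 x -> x = p \/ x = q.
Proof.
  intros Hp Hq Hpq Hx. destruct ef_ex as [e [f [Hef Hall]]].
  destruct (proj1 (Hall p) Hp) as [->| ->];
  destruct (proj1 (Hall q) Hq) as [->| ->];
  destruct (proj1 (Hall x) Hx) as [->| ->]; auto; congruence.
Qed.

Lemma T3lem r p q : congruence op r -> r p q -> p <> q -> ~ S0 p -> ~ S0 q ->
  forall x, S0 x -> r x z.
Proof.
  intros Hr H Hpq Hp Hq.
  assert (HS0 : forall x, S0 x -> Icl op p x).
  { intros x Hx. split.
    - destruct (H2 _ _ S0_is_ideal (Jp_ideal p)) as [A|A]; auto.
      exfalso; apply Hp, A, Jp_refl.
    - apply Jcl_S0_S1; auto. }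
  intros x Hx. apply (F4 r p); auto.
  - exists p, q. split; auto. intro s. split.
    + intro Hs. destruct (classic (S0 s)) as [HsS|HsS].
      * exfalso; exact (Jcl_S0_S1 p s Hp HsS Hs).
      * apply S1_two; auto.
    + intros [-> | ->]; apply Jcl_S1; auto.
  - intro Hall. destruct nontriv as [a [b [Ha [Hb Hab]]]].
    destruct (classic (a = z)) as [Ea|Ea].
    + apply Hab. rewrite Ea. symmetry. apply Hall, HS0; auto.
    + apply Ea, Hall, HS0; auto.
  - intros u v Hu Hv.
    assert (forall w, Jcl op p w -> w = p \/ w = q).
    { intros w Hw. destruct (classic (S0 w)) as [HwS|HwS].
      * exfalso; exact (Jcl_S0_S1 p w Hp HwS Hw).
      * apply S1_two; auto. }
    destruct (H0 u Hu) as [-> | ->], (H0 v Hv) as [-> | ->];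
      first [exact (cong_refl _ _ Hr) | assumption | apply cong_sym; assumption].
Qed.

Lemma allz r p q : congruence op r -> r q p -> ~ S0 q -> S0 p -> forall x, r x z.
Proof.
  intros Hr H Hq Hp.
  destruct (nil_S0 p Hp) as [n Hn]. pose proof (cong_pw r q p n Hr H) as Hqz.
  rewrite pw_idem, Hn in Hqz; auto.
  assert (HS1 : forall c, ~ S0 c -> r c z).
  { intros c Hc. rewrite <- (rz q c); auto. rewrite <- (zl c). apply cong_mulr; auto. }
  destruct ef_ex as [e [f [Hef Hall]]].
  assert (He : ~ S0 e) by (apply Hall; auto). assert (Hf : ~ S0 f) by (apply Hall; auto).
  assert (Hef' : r e f).
  { apply cong_trans with z; auto. apply cong_sym; auto. }
  intro x. destruct (classic (S0 x)).
  - apply (T3lem r e f); auto.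
  - auto.
Qed.

Lemma pair_C p q : p <> q -> exists K T, Shape K T /\ G K T p q /\
  (forall r, congruence op r -> r p q -> forall x y, G K T x y -> r x y).
Proof.
  intros Hpq.
  assert (Gin : forall r K T, congruence op r -> (forall x, K x -> r x z) ->
            (forall x y, T x -> T y -> r x y) -> forall x y, G K T x y -> r x y).
  { intros r K T Hr HK HT x y [->|[[A B]|[A B]]].
    - exact (cong_refl _ _ Hr).
    - apply cong_trans with z; auto. apply cong_sym; auto.
    - auto. }
  destruct (classic (S0 p)) as [Hp|Hp]; destruct (classic (S0 q)) as [Hq|Hq].
  - destruct (classic (Jcl op p q)) as [Hc|Hc].
    + exists (Icl op p), (Jcl op p). split; [|split].
      * right; left. exists p. split; auto. split; intro; tauto.
      * right; right. split; auto using Jcl_refl.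
      * intros r Hr H. apply Gin; auto.
        -- intros x Hx. destruct (classic (forall s, Icl op p s <-> s = z)) as [Hz|Hz].
           ++ apply Hz in Hx; subst; exact (cong_refl _ _ Hr).
           ++ apply (F4 r p); auto.
              ** exists p, q. split; auto. intro s; split.
                 apply size2; auto. intros [-> | ->]; auto using Jcl_refl.
              ** intros u v Hu Hv.
                 destruct (size2 p q Hp Hc Hpq u Hu) as [-> | ->],
                          (size2 p q Hp Hc Hpq v Hv) as [-> | ->];
                 first [exact (cong_refl _ _ Hr) | assumption | apply cong_sym; assumption].
        -- intros u v Hu Hv.
           destruct (size2 p q Hp Hc Hpq u Hu) as [-> | ->],
                    (size2 p q Hp Hc Hpq v Hv) as [-> | ->];
           first [exact (cong_refl _ _ Hr) | assumption | apply cong_sym; assumption].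
    + destruct (Jp_chain p q) as [A|A].
      *
        exists (Jp op q), (fun _ => False). split; [|split].
        -- left. exists q. split; auto. split; intro; tauto.
        -- right; left. split; [apply A, Jp_refl|apply Jp_refl].
        -- intros r Hr H. apply Gin; auto; [|tauto].
           assert (Hq0 : r q z).
           { apply (F1 r q p); auto. apply A, Jp_refl.
             intro HC; apply Hc, Jcl_sym; auto. apply cong_sym; auto. }
           intros x Hx. apply (cong_J r q x); auto.
      * exists (Jp op p), (fun _ => False). split; [|split].
        -- left. exists p. split; auto. split; intro; tauto.
        -- right; left. split; [apply Jp_refl|apply A, Jp_refl].
        -- intros r Hr H. apply Gin; auto; [|tauto].
           assert (Hp0 : r p z).
           { apply (F1 r p q); auto. apply A, Jp_refl. }
           intros x Hx. apply (cong_J r p x); auto.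
  - exists (fun _ => True), (fun _ => False). split; [|split].
    + right; right; right; auto.
    + right; left; auto.
    + intros r Hr H. apply Gin; auto; [|tauto].
      intros x _. apply (allz r p q); auto. apply cong_sym; auto.
  - exists (fun _ => True), (fun _ => False). split; [|split].
    + right; right; right; auto.
    + right; left; auto.
    + intros r Hr H. apply Gin; auto; [|tauto].
      intros x _. apply (allz r q p); auto.
  - exists S0, (fun x => ~ S0 x). split; [|split].
    + right; right; left. split; intro; tauto.
    + right; right. auto.
    + intros r Hr H. apply Gin; auto.
      * intros x Hx. apply (T3lem r p q); auto.
      * intros u v Hu Hv.
        destruct (S1_two p q u Hp Hq Hpq Hu) as [-> | ->],
                 (S1_two p q v Hp Hq Hpq Hv) as [-> | ->];
        first [exact (cong_refl _ _ Hr) | assumption | apply cong_sym; assumption].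
Qed.

Lemma backward_delta : Delta_semigroup op.
Proof.
  intros r s Hr Hs.
  destruct (classic (forall x y, r x y -> s x y)) as [A|A]; [left; auto|right].
  apply not_all_ex_not in A. destruct A as [p A].
  apply not_all_ex_not in A. destruct A as [q A].
  apply imply_to_and in A. destruct A as [Hrpq Hspq].
  assert (Hpq : p <> q) by (intro; subst; apply Hspq, cong_refl; auto).
  intros x y Hxy.
  destruct (classic (x = y)) as [->|Hne]; [apply cong_refl; auto|].
  destruct (pair_C x y Hne) as [K [T [ShK [Gxy Cxy]]]].
  destruct (pair_C p q Hpq) as [K' [T' [ShK' [Gpq Cpq]]]].
  destruct (shape_chain K T K' T' ShK ShK') as [B|B].
  - apply (Cpq r Hr Hrpq). apply B; auto.
  - exfalso. apply Hspq. apply (Cxy s Hs Hxy). apply B; auto.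
Qed.

End Backward.

Section Forward.
Hypothesis HDelta : Delta_semigroup op.

Lemma ideal_z I : ideal op I -> I z.
Proof. intros [[a Ha] Hc]. rewrite <- (zl a). apply (Hc a z Ha). Qed.

Lemma fw2 : forall I J, ideal op I -> ideal op J ->
       (forall s, I s -> J s) \/ (forall s, J s -> I s).
Proof.
  intros I J HI HJ.
  assert (HzI := ideal_z I HI). assert (HzJ := ideal_z J HJ).
  destruct (HDelta (rees I) (rees J) (rees_cong I (proj2 HI)) (rees_cong J (proj2 HJ))) as [A|A].
  - left. intros s Hs. destruct (A s z (or_intror (conj Hs HzI))) as [->|[B _]]; auto.
  - right. intros s Hs. destruct (A s z (or_intror (conj Hs HzJ))) as [->|[B _]]; auto.
Qed.

Lemma notJ_bc b c : S0 b -> ~ (exists c, ~ S0 c /\ b = b ** c) -> ~ S0 c -> ~ Jp op (b ** c) b.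
Proof.
  intros Hb Hn Hc [x [y E]].
  rewrite lmul_mul, rmul_mul, <- lmul_mul in E.
  set (c' := rmul op c y) in *.
  assert (Hbz : b <> z).
  { intro Ez. apply Hn. exists c. split; auto. rewrite Ez, zl; auto. }
  assert (E2 : b = ctx x b (Some c')) by (unfold ctx; simpl; rewrite <- lmul_mul; auto).
  destruct (classic (S0 c')) as [Hc'|Hc'].
  { apply Hbz. apply (iter_eq b x (Some c')); simpl; auto. }
  destruct (nS0o_dec x) as [Hx|Hx]; [| apply Hbz; apply (iter_eq b x (Some c')); auto].
  apply Hn. exists c'. split; auto.
  destruct x as [x1|]; simpl in *; auto.
  rewrite E at 2. rewrite <- Hassoc, <- Hassoc, (rz c' c'); auto.
Qed.

Lemma fw3 : forall b, S0 b ->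
       (exists c, ~ S0 c /\ b = op b c) \/
       (forall c, ~ S0 c ->
          exists (x : option S) (d : S), S0 d /\ op b c = lmul op x (op b d)).
Proof.
  intros b Hb. destruct (classic (exists c, ~ S0 c /\ b = b ** c)) as [|Hn]; [left; auto|right].
  intros c Hc.
  set (A := fun w => exists (x : option S) (d : S), S0 d /\ w = lmul op x (b ** d)).
  assert (HA : forall x d, S0 d -> A (lmul op x (b ** d))) by (intros x d Hd; exists x, d; auto).
  assert (Hcc : c ** c = c) by (apply rz; auto).
  destruct (HDelta (chain (Rp b (b ** c))) (rees (Jp op (b ** c)))
     (Rp_cong _ _) (rees_cong _ (Jp_clos _))) as [B|B].
  - exfalso. destruct (B _ _ (Rp_uv b (b ** c))) as [E|[E _]].
    + apply Hn. exists c; auto.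
    + apply (notJ_bc b c); auto.
  - assert (Hch : chain (Rp b (b ** c)) (b ** c) z).
    { apply B. right. split. apply Jp_refl. apply Jp_to_z. }
    assert (Hinv : forall p q, Rp b (b ** c) p q -> (A (p ** c) <-> A (q ** c))).
    { intros p q [x [y [-> ->]]]. unfold ctx.
      destruct y as [y0|]; simpl.
      - destruct (classic (S0 y0)) as [Hy|Hy].
        + split; intros _.
          * rewrite <- !lmul_mul, <- !Hassoc; apply HA; auto using S0_l, S0_r.
          * rewrite <- !lmul_mul, <- !Hassoc; apply HA; auto using S0_l, S0_r.
        + rewrite lmul_mul, <- (Hassoc _ c y0), (rz c y0); auto. tauto.
      - rewrite lmul_mul, <- (Hassoc _ c c), Hcc. tauto. }
    pose proof (chain_inv _ (fun w => A (w ** c)) Hinv _ _ Hch) as HH. simpl in HH.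
    assert (A (z ** c)) by (rewrite zl; exists None, z; split; [apply S0_z|simpl; rewrite zr; auto]).
    apply HH in H. rewrite <- Hassoc, Hcc in H. exact H.
Qed.


Lemma notJ_cb b c : S0 b -> ~ S0 c -> c ** b <> b -> ~ Jp op (c ** b) b.
Proof.
  intros Hb Hc Hne [x [y E]].
  change (c ** b) with (lmul op (Some c) b) in E. rewrite <- lmul_omul in E.
  assert (Hbz : b <> z).
  { intro Ez. apply Hne. rewrite Ez, zr; auto. }
  destruct (omul x (Some c)) as [c'|] eqn:EX; [|destruct x; discriminate].
  simpl in E.
  destruct (classic (S0 c')) as [Hc'|Hc'].
  { apply Hbz. apply (iter_eq b (Some c') y); simpl; auto. }
  destruct (nS0o_dec y) as [Hy|Hy]; [| apply Hbz; apply (iter_eq b (Some c') y); auto].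
  apply Hne.
  assert (E2 : c' ** b = b).
  { rewrite E at 1. rewrite <- rmul_mul, Hassoc, (rz c' c'); auto. }
  rewrite <- E2, Hassoc, (rz c c'); auto.
Qed.

Lemma fw4 : forall b, S0 b ->
       (forall s, (exists c, ~ S0 c /\ s = op c b) <-> s = b) \/
       (exists c, ~ S0 c /\
          ((exists d (y : option S), S0 d /\ op c b = op d (rmul op b y)) \/
           (exists (x : option S) d, S0 d /\ op c b = lmul op x (op b d)))).
Proof.
  intros b Hb.
  destruct ef_ex as [e [f [Hef Hall]]].
  assert (He : ~ S0 e) by (apply Hall; auto).
  destruct (classic (e ** b = b)) as [Heb|Heb].
  { left. intro s; split.
    - intros [c [Hc ->]]. rewrite <- Heb, Hassoc, (rz c e); auto.
    - intros ->. exists e; auto. }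
  right.
  set (B := fun w => (exists d (y : option S), S0 d /\ w = d ** rmul op b y) \/
                     (exists (x : option S) d, S0 d /\ w = lmul op x (b ** d))).
  change (exists c, ~ S0 c /\ B (c ** b)).
  apply NNPP. intro Hn.
  assert (HnB : forall c, ~ S0 c -> ~ B (c ** b)) by (intros c Hc HB; apply Hn; exists c; auto).
  assert (B1 : forall d y, S0 d -> B (d ** rmul op b y)) by (intros; left; exists d, y; auto).
  assert (B2 : forall x d, S0 d -> B (lmul op x (b ** d))) by (intros; right; exists x, d; auto).
  assert (Bl : forall w c, B w -> B (c ** w)).
  { intros w c [[d [y [Hd ->]]]|[x [d [Hd ->]]]].
    - rewrite Hassoc. apply B1; apply S0_l; auto.
    - change (c ** lmul op x (b ** d)) with (lmul op (Some c) (lmul op x (b ** d))).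
      rewrite <- (lmul_omul (Some c) x). apply B2; auto. }
  assert (Bx : forall w x, B w -> B (lmul op x w)).
  { intros w [c|] HB; simpl; auto. }
  assert (Br : forall w c, B w -> B (w ** c)).
  { intros w c [[d [y [Hd ->]]]|[x [d [Hd ->]]]].
    - rewrite <- Hassoc. change (rmul op b y ** c) with (rmul op (rmul op b y) (Some c)).
      rewrite <- rmul_omul. apply B1; auto.
    - rewrite <- lmul_mul, <- Hassoc. apply B2; apply S0_r; auto. }
  assert (Bz : B z) by (rewrite <- (zl b); apply (B1 z None), S0_z).
  assert (Hbz : b <> z) by (intro E; apply Heb; rewrite E, zr; auto).
  assert (HnBb : ~ B b).
  { intros [[d [y [Hd E]]]|[x [d [Hd E]]]]; apply Hbz.
    - apply (iter_eq b (Some d) y); simpl; auto. unfold ctx; simpl. rewrite rmul_mul; auto.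
    - apply (iter_eq b x (Some d)); simpl; auto. unfold ctx; simpl. rewrite <- lmul_mul; auto. }
  assert (HnBx : forall x, nS0o x -> ~ B (lmul op x b) /\ ~ B (lmul op x (e ** b))).
  { intros [c|] Hx; simpl in *; split; auto.
    - rewrite Hassoc, (rz c e); auto. }
  assert (Hinv : forall p q, Rp b (e ** b) p q -> (B p <-> B q)).
  { intros p q [x [y [-> ->]]]. unfold ctx.
    destruct (nS0o_dec x) as [Hx|Hx].
    2:{ destruct x as [x0|]; simpl in Hx; [|contradiction]. simpl.
        split; intros _; [rewrite Hassoc, rmul_mul | rewrite rmul_mul]; apply B1; auto using S0_r. }
    destruct (nS0o_dec y) as [Hy|Hy].
    2:{ destruct y as [y0|]; simpl in Hy; [|contradiction]. simpl.
        split; intros _.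
        - change (e ** b) with (lmul op (Some e) b). rewrite <- lmul_omul, <- lmul_mul.
          apply B2; auto.
        - rewrite <- lmul_mul. apply B2; auto. }
    destruct (HnBx x Hx) as [N1 N2].
    destruct y as [c|]; simpl in *; [|tauto].
    destruct (classic (exists c0, ~ S0 c0 /\ b = b ** c0)) as [[c0 [Hc0 Ec0]]|Hn3].
    - split; intro HB; exfalso.
      + apply N1. apply (Br _ c0) in HB.
        rewrite <- Hassoc, (rz c c0), <- lmul_mul, <- Ec0 in HB; auto.
      + apply N2. apply (Br _ c0) in HB.
        rewrite <- Hassoc, (rz c c0), <- lmul_mul, <- Hassoc, <- Ec0 in HB; auto.
    - destruct (fw3 b Hb) as [|H3']; [contradiction|].
      destruct (H3' c Hy) as [x' [d [Hd E]]].
      assert (HBbc : B (b ** c)) by (rewrite E; apply B2; auto).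
      split; intros _.
      + rewrite <- lmul_mul, <- Hassoc. apply Bx, Bl; auto.
      + rewrite <- lmul_mul. apply Bx; auto. }
  destruct (HDelta (chain (Rp b (e ** b))) (rees (Jp op (e ** b)))
     (Rp_cong _ _) (rees_cong _ (Jp_clos _))) as [A|A].
  - destruct (A _ _ (Rp_uv b (e ** b))) as [E|[E _]].
    + apply Heb; auto.
    + apply (notJ_cb b e); auto.
  - assert (Hch : chain (Rp b (e ** b)) (e ** b) z).
    { apply A. right. split. apply Jp_refl. apply Jp_to_z. }
    pose proof (chain_inv _ B Hinv _ _ Hch) as HH.
    apply (HnB e He). apply HH; auto.
Qed.


Lemma fw5 : forall b a,
       (exists u v, u <> v /\ forall s, Jcl op b s <-> (s = u \/ s = v)) ->
       ~ (forall s, Icl op b s <-> s = z) ->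
       Icl op b a ->
       exists x y : option S,
         (exists t, Jcl op b t /\ Jcl op a (rmul op (lmul op x t) y)) /\
         (exists t, Jcl op b t /\ ~ Jcl op a (rmul op (lmul op x t) y)).
Proof.
  intros b a [u [v [Huv Hs]]] Hnz Ha.
  assert (Hu : Jcl op b u) by (apply Hs; auto).
  assert (Hv : Jcl op b v) by (apply Hs; auto).
  assert (Hbz : Icl op b z).
  { split. exists None, (Some z). simpl. symmetry; apply zr.
    intro Hc. apply Huv.
    rewrite (Jcl_z u), (Jcl_z v); auto; eapply Jcl_trans; eauto; apply Jcl_sym; auto. }
  destruct (HDelta (chain (Rp u v)) (rees (Icl op b))
     (Rp_cong _ _) (rees_cong _ (Icl_clos _))) as [A|A].
  - exfalso. destruct (A _ _ (Rp_uv u v)) as [E|[[_ E] _]]; auto.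
  - assert (Hcr : exists p q, chain (Rp u v) p q /\ Jcl op a p /\ ~ Jcl op a q).
    { destruct (classic (a = z)) as [Ea|Ea].
      - apply not_all_ex_not in Hnz. destruct Hnz as [w Hw].
        assert (Hw1 : Icl op b w /\ w <> z).
        { destruct (classic (Icl op b w)) as [H1|H1].
          - split; auto. intro E; subst; apply Hw; tauto.
          - exfalso. destruct (classic (w = z)) as [E|E]; [subst; contradiction|].
            apply Hw; tauto. }
        destruct Hw1 as [Hw1 Hw2].
        exists z, w. split; [|split].
        + apply chain_sym, A. right; auto.
        + subst; apply Jcl_refl.
        + intro Hc. subst. apply Hw2. apply Jcl_z; auto.
      - exists a, z. split; [|split].
        + apply A. right; auto.
        + apply Jcl_refl.
        + intro Hc. apply Ea. apply Jp_z. apply Jcl_Jp'; auto. }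
    destruct Hcr as [p [q [Hch [Hp Hq]]]].
    destruct (chain_cross _ (Jcl op a) _ _ Hch Hp Hq) as [p' [q' [[R|R] [Hp' Hq']]]];
      destruct R as [x [y [Ep Eq]]]; exists x, y.
    + split; [exists u|exists v]; split; auto; subst p' q'; unfold ctx in *; auto.
    + split; [exists v|exists u]; split; auto; subst p' q'; unfold ctx in *; auto.
Qed.

End Forward.
End T2RProof.

Theorem theorem1 (S : Type) (op : S -> S -> S) (Hassoc : associative op) :
  T2R op <->
  exists (S0 : S -> Prop) (z : S),
    (* (1) *)
    (T2R_decomp op S0 z /\
     (forall a c, S0 a -> ~ S0 c -> S0 (op a c))) /\
    (* (2) *)
    (forall I J, ideal op I -> ideal op J ->
       (forall s, I s -> J s) \/ (forall s, J s -> I s)) /\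
    (* (3) *)
    (forall b, S0 b ->
       (exists c, ~ S0 c /\ b = op b c) \/
       (forall c, ~ S0 c ->
          exists (x : option S) (d : S), S0 d /\ op b c = lmul op x (op b d))) /\
    (* (4) *)
    (forall b, S0 b ->
       (forall s, (exists c, ~ S0 c /\ s = op c b) <-> s = b) \/
       (exists c, ~ S0 c /\
          ((exists d (y : option S), S0 d /\ op c b = op d (rmul op b y)) \/
           (exists (x : option S) d, S0 d /\ op c b = lmul op x (op b d))))) /\
    (* (5) *)
    (forall b a,
       (exists u v, u <> v /\ forall s, Jcl op b s <-> (s = u \/ s = v)) ->
       ~ (forall s, Icl op b s <-> s = z) ->
       Icl op b a ->
       exists x y : option S,
         (exists t, Jcl op b t /\ Jcl op a (rmul op (lmul op x t) y)) /\
         (exists t, Jcl op b t /\ ~ Jcl op a (rmul op (lmul op x t) y))).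
Proof.
  split.
  - intros [HDelta [S0 [z HD]]]. exists S0, z.
    split; [split; [exact HD|]|split; [|split; [|split]]].
    + intros a c Ha _. apply (S0_r S op S0 z HD); auto.
    + eapply fw2; eauto.
    + eapply fw3; eauto.
    + eapply fw4; eauto.
    + eapply fw5; eauto.
  - intros [S0 [z [[HD _] [H2 [H3 [H4 H5]]]]]]. split.
    + eapply backward_delta; eauto.
    + exists S0, z; exact HD.
Qed.
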